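(* Let $P$ be a finite poset, $\epsilon\in\{1,-1\}$ and $\xi\in S^{(\epsilon)}$ with $d=\xi(-\infty)>q^{(\epsilon)}\mathrm{dist}(-\infty,\infty)$. Then every $C\in C_\xi^{[d-\epsilon]}$ contains an element $z$ with $\xi(z)>\epsilon$.
   Context: $P^\pm=P\cup\{-\infty,\infty\}$, $-\infty<z<\infty$ for $z\in P$; $P^-=P\cup\{-\infty\}$. Saturated chain: $x=z_0\lessdot\cdots\lessdot z_t=y$, length $t$; $q^{(\epsilon)}\mathrm{dist}(x,y)=\max\{\epsilon t:$ saturated chain of length $t$ from $x$ to $y$ in $P^\pm\}$. $\xi^+(B)=\sum_{b\in B}\xi(b)$. $S^{(m)}=\{\xi\in\mathbb Z^{P^-}:\xi(x)\ge m\ \forall x\in P,\ \xi(-\infty)\ge\xi^+(C)+m$ for every maximal chain $C$\}; $C_\xi^{[m]}$ = maximal chains $C$ of $P$ with $\xi^+(C)=m$. *)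

(* Defs.v *)
From HB Require Import structures.
From mathcomp Require Import all_boot all_order all_algebra.
Set Implicit Arguments. Unset Strict Implicit. Unset Printing Implicit Defensive.
Import Order.TTheory GRing.Theory Num.Theory.

Local Open Scope order_scope.

Section Ext.
Context {disp : Order.disp_t} (P : finPOrderType disp).

Inductive ext := MInf | Elt of P | PInf.

Definition ext_enc (x : ext) : option (option P) :=
  match x with MInf => None | Elt a => Some (Some a) | PInf => Some None end.
Definition ext_dec (o : option (option P)) : ext :=
  match o with None => MInf | Some (Some a) => Elt a | Some None => PInf end.
Lemma ext_encK : cancel ext_enc ext_dec. Proof. by case. Qed.

HB.instance Definition _ := Finite.copy ext (can_type ext_encK).

Definition ext_le (x y : ext) : bool :=
  match x, y with
  | MInf, _ => true
  | _, PInf => true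
  | Elt a, Elt b => (a <= b)%O
  | _, _ => false
  end.
Definition ext_lt (x y : ext) : bool := (x != y) && ext_le x y.

Definition ext_cover (x y : ext) : bool :=
  ext_lt x y && [forall z, ~~ (ext_lt x z && ext_lt z y)].

Definition sat_chain (t : nat) (x y : ext) : bool :=
  [exists s : t.-tuple ext, path ext_cover x s && (last x s == y)].

(* lengths of saturated chains from x to y (a saturated chain of length t
   consists of t+1 distinct elements, so t < #|ext|) *)
Definition sat_lengths (x y : ext) : seq nat :=
  [seq t <- iota 0 #|{: ext}| | sat_chain t x y].

(* q^{(eps)}dist(x,y) = max { eps * t : saturated chain of length t from x to y } *)
Definition qdist (eps : int) (x y : ext) : int :=
  \big[Num.max/(eps * (head 0 (sat_lengths x y))%:Z)%R]_(t <- sat_lengths x y)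
     (eps * t%:Z)%R.

Definition is_chain (C : {set P}) : Prop :=
  forall x y, x \in C -> y \in C -> (x >=< y)%O.
Definition maximal_chain (C : {set P}) : Prop :=
  is_chain C /\ (forall D : {set P}, is_chain D -> C \subset D -> D = C).

(* P^- = P u {-oo}, with None standing for -oo *)
Definition Pminus := option P.

Definition xiplus (xi : Pminus -> int) (B : {set P}) : int :=
  (\sum_(b in B) xi (Some b))%R.

Definition inS (m : int) (xi : Pminus -> int) : Prop :=
  (forall x : P, (m <= xi (Some x))%R) /\
  (forall C : {set P}, maximal_chain C -> (xiplus xi C + m <= xi None)%R).

Definition C_xi (xi : Pminus -> int) (m : int) (C : {set P}) : Prop :=
  maximal_chain C /\ xiplus xi C = m.

End Ext.

(* Main.v *)
Require Import Defs.
From HB Require Import structures.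
From mathcomp Require Import all_boot all_order all_algebra.
From mathcomp Require Import zify.
Import Order.TTheory GRing.Theory Num.Theory.

Section Aux.
Context {disp : Order.disp_t} (P : finPOrderType disp).
Local Notation E := (ext P).

Lemma ext_le_refl : reflexive (@ext_le _ P).
Proof. by case=> //= a; rewrite Order.POrderTheory.lexx. Qed.

Lemma ext_le_trans : transitive (@ext_le _ P).
Proof.
case=> [|b|] [|a|] [|c|] //=; exact: Order.POrderTheory.le_trans.
Qed.

Lemma ext_le_anti (x y : E) : ext_le x y -> ext_le y x -> x = y.
Proof.
case: x; case: y => //= a b h1 h2.
by rewrite (@Order.POrderTheory.le_anti _ _ a b) // h1 h2.
Qed.

Lemma ext_lt_trans : transitive (@ext_lt _ P).
Proof.
move=> y x z /andP[nxy lxy] /andP[nyz lyz]; apply/andP; split;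
  last exact: ext_le_trans lyz.
apply/eqP=> exz; subst z.
by move/eqP: nxy; apply; apply: ext_le_anti.
Qed.

Lemma ext_lt_irr : irreflexive (@ext_lt _ P).
Proof. by move=> x; rewrite /ext_lt eqxx. Qed.

Lemma ext_ltW (x y : E) : ext_lt x y -> ext_le x y.
Proof. by case/andP. Qed.
Arguments ext_ltW {x y}.

Lemma ext_lt_le_false (x y : E) : ext_lt x y -> ext_le y x -> False.
Proof. by case/andP=> /eqP nxy lxy lyx; apply: nxy; apply: ext_le_anti. Qed.
Arguments ext_lt_le_false {x y}.

Lemma cover_path (x : E) (s : seq E) :
  sorted (@ext_lt _ P) (x :: s) ->
  (forall z, (forall w, w \in x :: s -> @ext_le _ P z w || @ext_le _ P w z) -> z \in x :: s) ->
  path (@ext_cover _ P) x s.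
Proof.
move=> srt clo; apply/(pathP x) => i hi.
set l := x :: s.
have sle : sorted (@ext_le _ P) l := sub_sorted (@ext_ltW) srt.
have hle : forall j k, j <= k -> k < size l -> @ext_le _ P (nth x l j) (nth x l k).
  move=> j k hjk hk; apply: (sorted_leq_nth ext_le_trans ext_le_refl) => //.
  by rewrite inE (leq_ltn_trans hjk hk).
have -> : nth x s i = nth x l i.+1 by [].
have hlt : @ext_lt _ P (nth x l i) (nth x l i.+1).
  apply: (sorted_ltn_nth ext_lt_trans) => //; rewrite inE /=; lia.
rewrite /ext_cover hlt /=; apply/forallP => z; apply/negP => /andP[h1 h2].
have zin : z \in l.
  apply: clo => w /(nthP x) [k hk <-].
  case: (leqP k i) => hki.
    by rewrite (ext_le_trans _ _ _ (hle _ _ hki _) (ext_ltW h1)) ?orbT //=; lia.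
  by rewrite (ext_le_trans _ _ _ (ext_ltW h2) (hle _ _ hki hk)).
case/(nthP x): zin => k hk ek; rewrite -ek in h1 h2.
case: (leqP k i) => hki.
  by apply: (ext_lt_le_false h1); apply: hle => //=; lia.
by apply: (ext_lt_le_false h2); exact: (hle i.+1 k).
Qed.

End Aux.

Local Open Scope ring_scope.

Theorem mainTheorem14 (disp : Order.disp_t) (P : finPOrderType disp)
  (eps : int) (heps : eps = 1 \/ eps = -1)
  (xi : Pminus P -> int) (hxi : inS eps xi)
  (hd : qdist eps (MInf P) (PInf P) < xi None) :
  forall C : {set P}, C_xi xi (xi None - eps) C ->
    exists2 z : P, z \in C & eps < xi (Some z).
Proof.
move=> C [[hch hmax] hsum].
have [/existsP [z /andP [zC hz]]|hno] := boolP [exists z in C, eps < xi (Some z)].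
  by exists z.
exfalso.
have heq : forall z, z \in C -> xi (Some z) = eps.
  move=> z zC; apply/eqP; rewrite eq_le hxi.1 andbT.
  by move/existsPn: hno => /(_ z); rewrite zC /= -leNgt.
have hsumC : xiplus xi C = eps * (#|C|)%:Z.
  rewrite /xiplus (eq_bigr (fun _ => eps)) ?sumr_const; last by move=> i /heq.
  by rewrite -mulr_natr natz.
pose s := sort <=%O (enum C).
have sorted_s : sorted <%O s.
  rewrite Order.POrderTheory.lt_sorted_uniq_le sort_uniq enum_uniq /=.
  apply: (@sort_sorted_in _ (mem C)).
    by move=> a b aC bC; apply: hch.
  by apply/allP => a; rewrite mem_enum.
have memsC : forall a, (a \in s) = (a \in C) by move=> a; rewrite mem_sort mem_enum.
have Elt_inj : injective (@Elt _ P) by move=> ? ? [].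
pose tl := [seq Elt a | a <- s] ++ [:: PInf P].
have hsrt : sorted (@ext_lt _ P) (MInf P :: tl).
  rewrite /= cat_path; apply/andP; split.
    move: sorted_s; case: (s) => [|a s'] //= hs.
    elim: s' a hs => [|b s' IH] a //= /andP [hab hs].
    rewrite IH // andbT /ext_lt /= (inj_eq Elt_inj) (Order.POrderTheory.ltW hab) andbT.
    by rewrite Order.POrderTheory.lt_eqF.
  rewrite /= andbT.
  have : last (MInf P) [seq Elt a | a <- s] \in MInf P :: [seq Elt a | a <- s].
    exact: mem_last.
  rewrite inE => /orP [/eqP -> //|/mapP [a _ ->] //].
have hclo : forall z, (forall w, w \in MInf P :: tl -> ext_le z w || ext_le w z) ->
    z \in MInf P :: tl.
  case=> [|a|] hw; rewrite ?inE ?eqxx //; last first.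
    by rewrite mem_cat inE eqxx orbT orbT.
  have aC : a \in C.
    have hcmp : forall c, c \in C -> (a >=< c)%O.
      move=> c cC; apply: (hw (Elt c)).
      by rewrite inE mem_cat map_f ?orbT // memsC.
    have chD : is_chain (a |: C).
      move=> x y; rewrite !inE => /orP [/eqP ->|xC] /orP [/eqP ->|yC].
      - exact: Order.POrderTheory.comparablexx.
      - exact: hcmp.
      - by rewrite Order.POrderTheory.comparable_sym; apply: hcmp.
      - exact: hch.
    by rewrite -(hmax _ chD (subsetUr _ _)) setU11.
  by rewrite mem_cat map_f ?orbT // memsC.
have hpath := @cover_path _ P _ _ hsrt hclo.
have hsize : size tl == #|C|.+1.
  by rewrite size_cat size_map size_sort -cardE addn1.
have hchain : sat_chain #|C|.+1 (MInf P) (PInf P).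
  apply/existsP; exists (Tuple hsize); rewrite /= hpath /=.
  by rewrite /tl last_cat.
have huniq : uniq (MInf P :: tl).
  exact: (sorted_uniq (@ext_lt_trans _ P) (@ext_lt_irr _ P) hsrt).
have hcard : (#|C|.+2 <= #|{: ext P}|)%N.
  have := max_card (mem (MInf P :: tl)).
  by rewrite (card_uniqP huniq) /= (eqP hsize).
have hin : #|C|.+1 \in sat_lengths (MInf P) (PInf P).
  by rewrite mem_filter hchain mem_iota add0n.
have hq : eps * (#|C|.+1)%:Z <= qdist eps (MInf P) (PInf P).
  exact: (Order.TotalTheory.le_bigmax_seq _ _ xpredT (fun t : nat => eps * t%:Z) hin).
move: hsum; rewrite hsumC => hsum.
case: heps => ?; subst eps; lia.
Qed.
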